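(* Let $x_0\in\mathbb{R}\cup\{+\infty\}$, $T<x_0$, $I:=[T,x_0)$, and let $\phi_1,\phi_2\in C^1(I)$ with $\phi_2(x)=o(\phi_1(x))$ as $x\to x_0$, $\phi_1(x)\neq0$, $\phi_2(x)\neq0$ and $W(x):=W(\phi_1,\phi_2;x)\neq0$ for all $x\in I$. Put $\Phi(x):=\phi_2(T)\phi_1(x)-\phi_1(T)\phi_2(x)$. Then, as $x\to x_0$, $$\Phi(x)\sim\phi_2(T)\phi_1(x),\qquad W(x)\Phi(x)^{-2}\sim\frac{1}{\phi_2(T)^2}\Big(\frac{\phi_2(x)}{\phi_1(x)}\Big)',\qquad \int_x^{x_0}W(t)\Phi(t)^{-2}\,dt\sim-\frac{1}{\phi_2(T)^2}\,\frac{\phi_2(x)}{\phi_1(x)},$$ and for every $x\in(T,x_0)$ the improper integral converges with $$\int_x^{x_0}W(t)\Phi(t)^{-2}\,dt=-\frac{1}{\phi_2(T)}\,\frac{\phi_2(x)}{\Phi(x)}.$$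
   Context: $W(g,h;x):=g(x)h'(x)-g'(x)h(x)$. Limits as $x\to x_0$ are for $x<x_0$. *)

(* Defs.v *)
From Stdlib Require Import Reals.
From Coquelicot Require Import Coquelicot.
Open Scope R_scope.

Definition left_filter (x0 : Rbar) : (R -> Prop) -> Prop :=
  match x0 with
  | Finite a => at_left a
  | _ => Rbar_locally x0
  end.

Definition in_I (T : R) (x0 : Rbar) (x : R) : Prop := T <= x /\ Rbar_lt x x0.

Definition C1_on (T : R) (x0 : Rbar) (f df : R -> R) : Prop :=
  forall x, in_I T x0 x ->
    filterlim (fun h => (f (x + h) - f x) / h)
      (within (fun h => h <> 0 /\ T <= x + h) (locally 0)) (locally (df x)) /\
    filterlim df (within (fun y => T <= y) (locally x)) (locally (df x)).

Definition Wr (g dg h dh : R -> R) (x : R) : R := g x * dh x - dg x * h x.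

(* Main.v *)
Require Import Defs.
From Stdlib Require Import Reals Lra.
From Coquelicot Require Import Coquelicot.
Open Scope R_scope.

Lemma lf_proper (T : R) (x0 : Rbar) : Rbar_lt T x0 -> ProperFilter (left_filter x0).
Proof. destruct x0; simpl; intros H; try contradiction.
- apply at_left_proper_filter.
- apply Rbar_locally_filter.
Qed.

Lemma lf_event (x : R) (x0 : Rbar) : Rbar_lt x x0 ->
  left_filter x0 (fun y => x < y /\ Rbar_lt y x0).
Proof. destruct x0 as [a| |]; simpl; intros H; try contradiction.
- assert (Hp : 0 < a - x) by lra. exists (mkposreal _ Hp). intros y Hy Hya.
  change (Rabs (y - a) < a - x) in Hy. apply Rabs_def2 in Hy. split; lra.
- exists x. intros y Hy. split; simpl; auto.
Qed.

Lemma loc_gt (T x : R) : T < x -> locally x (fun y => T < y).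
Proof. intros H. apply (locally_interval _ x T p_infty); simpl; auto. Qed.

Lemma C1_derive T x0 f df x : C1_on T x0 f df -> T < x -> Rbar_lt x x0 ->
  is_derive f x (df x).
Proof.
  intros HC HT Hx. destruct (HC x) as [H1 _]. { split; [lra|exact Hx]. }
  apply is_derive_Reals. intros eps Heps.
  destruct (H1 (ball (df x) eps) (locally_ball (df x) (mkposreal _ Heps))) as [d Hd].
  assert (Hp : 0 < Rmin d (x - T)). { apply Rmin_pos; [apply cond_pos|lra]. }
  exists (mkposreal _ Hp). intros h Hh0 Hh. simpl in Hh.
  apply Hd.
  - change (Rabs (h - 0) < d). rewrite Rminus_0_r. eapply Rlt_le_trans; [exact Hh|apply Rmin_l].
  - split; auto. assert (Rabs h < x - T) by (eapply Rlt_le_trans; [exact Hh|apply Rmin_r]).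
    apply Rabs_def2 in H. lra.
Qed.

Lemma C1_dcont T x0 f df x : C1_on T x0 f df -> T < x -> Rbar_lt x x0 ->
  continuity_pt df x.
Proof.
  intros HC HT Hx. destruct (HC x) as [_ H2]. { split; [lra|exact Hx]. }
  apply continuity_pt_filterlim. intros P HP. specialize (H2 P HP). unfold filtermap, within in H2 |- *.
  generalize (filter_and _ _ H2 (loc_gt T x HT)). apply filter_imp.
  intros y [Hy1 Hy2]. apply Hy1. lra.
Qed.

Lemma C1_rcont T x0 f df : C1_on T x0 f df -> Rbar_lt T x0 ->
  continuous (fun y => f (Rmax T y)) T.
Proof.
  intros HC HT. destruct (HC T) as [H1 _]. { split; [lra|exact HT]. }
  destruct (H1 (ball (df T) 1) (locally_ball (df T) (mkposreal _ Rlt_0_1))) as [d Hd].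
  intros P [eps HP]. rewrite Rmax_left in HP by lra.
  assert (Hp : 0 < Rmin d (eps / (1 + Rabs (df T)))).
  { apply Rmin_pos; [apply cond_pos|]. apply Rdiv_lt_0_compat; [apply cond_pos|].
    generalize (Rabs_pos (df T)); lra. }
  exists (mkposreal _ Hp). intros y Hy. change R in y. apply HP. change (Rabs (f (Rmax T y) - f T) < eps).
  change (Rabs (y - T) < Rmin d (eps / (1 + Rabs (df T)))) in Hy.
  destruct (Rle_dec y T) as [Hle|Hlt].
  - rewrite Rmax_left by lra. rewrite Rminus_diag, Rabs_R0. apply cond_pos.
  - rewrite Rmax_right by lra.
    assert (Hq := Hd (y - T)).
    assert (Hyd : Rabs (y - T) < d) by (eapply Rlt_le_trans; [exact Hy|apply Rmin_l]).
    assert (Hye : Rabs (y - T) < eps / (1 + Rabs (df T))) by (eapply Rlt_le_trans; [exact Hy|apply Rmin_r]).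
    rewrite Rabs_right in Hyd, Hye by lra.
    assert (Hq' : Rabs ((f (T + (y - T)) - f T) / (y - T) - df T) < 1).
    { apply Hq. change (Rabs (y - T - 0) < d). rewrite Rminus_0_r, Rabs_right; lra. split; lra. }
    replace (T + (y - T)) with y in Hq' by ring.
    set (q := (f y - f T) / (y - T)) in Hq'.
    assert (Heq : f y - f T = q * (y - T)) by (unfold q; field; lra).
    rewrite Heq, Rabs_mult, (Rabs_right (y - T)) by lra.
    assert (Rabs q < 1 + Rabs (df T)).
    { replace q with ((q - df T) + df T) by ring.
      eapply Rle_lt_trans; [apply Rabs_triang|]. lra. }
    apply Rmult_lt_compat_r with (r := y - T) in H; [|lra].
    eapply Rlt_trans; [exact H|].
    apply Rmult_lt_reg_r with (/ (1 + Rabs (df T))).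
    { apply Rinv_0_lt_compat. generalize (Rabs_pos (df T)); lra. }
    replace ((1 + Rabs (df T)) * (y - T) * / (1 + Rabs (df T))) with (y - T)
      by (field; generalize (Rabs_pos (df T)); lra). exact Hye.
Qed.

Lemma equiv_ratio {F : (R -> Prop) -> Prop} {FF : Filter F} (f g h : R -> R) :
  F (fun x => f x = g x * h x) -> filterlim h F (locally 1) -> is_equiv F f g.
Proof. intros He Hl eps. assert (B := Hl _ (locally_ball 1 eps)). unfold filtermap in B.
  generalize (filter_and _ _ He B). apply filter_imp. intros x [E B'].
  change (Rabs (g x - f x) <= eps * Rabs (g x)). change (Rabs (h x - 1) < eps) in B'.
  rewrite E. replace (g x - g x * h x) with (g x * (1 - h x)) by ring.
  rewrite Rabs_mult, Rmult_comm, Rabs_minus_sym.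
  apply Rmult_le_compat_r; [apply Rabs_pos|lra].
Qed.

Lemma r_lim {F : (R -> Prop) -> Prop} {FF : Filter F} (p1 p2 : R -> R) :
  is_domin F p1 p2 -> F (fun x => p1 x <> 0) ->
  filterlim (fun x => p2 x / p1 x) F (locally 0).
Proof. intros Hd Hn P [eps HP]. assert (e2 : 0 < eps/2) by (generalize (cond_pos eps); lra).
  specialize (Hd (mkposreal _ e2)). unfold filtermap.
  generalize (filter_and _ _ Hd Hn). apply filter_imp. intros x [H1 H2]. apply HP.
  change (Rabs (p2 x / p1 x - 0) < eps). change (Rabs (p2 x) <= eps/2 * Rabs (p1 x)) in H1.
  rewrite Rminus_0_r. unfold Rdiv. rewrite Rabs_mult, Rabs_inv.
  assert (Hp : 0 < Rabs (p1 x)) by (apply Rabs_pos_lt; auto).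
  apply Rle_lt_trans with (eps/2); [|generalize (cond_pos eps); lra].
  apply Rmult_le_reg_r with (Rabs (p1 x)); auto.
  rewrite Rmult_assoc, Rinv_l by lra. lra.
Qed.

Lemma lim_comp {F : (R -> Prop) -> Prop} (r k : R -> R) (L : R) :
  filterlim r F (locally 0) -> continuous k 0 -> k 0 = L ->
  filterlim (fun x => k (r x)) F (locally L).
Proof. intros H1 H2 H3. rewrite <- H3. eapply filterlim_comp; eauto. Qed.

Lemma Phi_nz (x0 : Rbar) (T : R) (phi1 dphi1 phi2 dphi2 : R -> R) (x : R) :
  Rbar_lt T x0 -> C1_on T x0 phi1 dphi1 -> C1_on T x0 phi2 dphi2 ->
  (forall x, in_I T x0 x -> phi1 x <> 0) ->
  (forall x, in_I T x0 x -> Wr phi1 dphi1 phi2 dphi2 x <> 0) ->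
  T < x -> Rbar_lt x x0 ->
  phi2 T * phi1 x - phi1 T * phi2 x <> 0.
Proof.
  intros HT H1 H2 Hn1 HW HTx Hx.
  set (f := fun y => phi2 (Rmax T y) / phi1 (Rmax T y)).
  set (df := fun c => Wr phi1 dphi1 phi2 dphi2 c / (phi1 c)^2).
  assert (Hd : forall c, T < c -> Rbar_lt c x0 -> is_derive f c (df c)).
  { intros c Hc Hc0.
    assert (Hq := is_derive_div phi2 phi1 c _ _ (C1_derive _ _ _ _ _ H2 Hc Hc0)
                     (C1_derive _ _ _ _ _ H1 Hc Hc0) (Hn1 c (conj (Rlt_le _ _ Hc) Hc0))).
    assert (Hq' : is_derive f c ((dphi2 c * phi1 c - phi2 c * dphi1 c) / phi1 c ^ 2)).
    { apply (is_derive_ext_loc (fun t => phi2 t / phi1 t)); auto.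
      generalize (loc_gt T c Hc). apply filter_imp. intros t Ht. unfold f.
      rewrite Rmax_right by lra. reflexivity. }
    replace (df c) with ((dphi2 c * phi1 c - phi2 c * dphi1 c) / phi1 c ^ 2); auto.
    unfold df, Wr. unfold Rdiv. ring. }
  assert (Hm := MVT_gen f T x df). cbv zeta in Hm.
  rewrite Rmin_left, Rmax_right in Hm by lra.
  destruct Hm as [c [Hc Heq]].
  - intros c Hc. apply Hd; [lra|]. apply Rbar_le_lt_trans with x; simpl; auto; lra.
  - intros c Hc. destruct (Req_dec c T) as [E|E].
    + subst c. apply continuity_pt_filterlim.
      apply (continuous_mult (fun y => phi2 (Rmax T y)) (fun y => / phi1 (Rmax T y))).
      * eapply C1_rcont; eauto.
      * apply continuous_Rinv_comp. eapply C1_rcont; eauto.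
        rewrite Rmax_left by lra. apply Hn1. split; [lra|auto].
    + apply continuity_pt_filterlim. apply (ex_derive_continuous (K:=R_AbsRing) (V:=R_NormedModule) f c). exists (df c).
      apply Hd; [lra|]. apply Rbar_le_lt_trans with x; simpl; auto; lra.
  - assert (Hcx : Rbar_lt c x0) by (apply Rbar_le_lt_trans with x; simpl; auto; lra).
    assert (HcI : in_I T x0 c) by (split; [lra|auto]).
    assert (Hdf : df c <> 0).
    { unfold df. unfold Rdiv. apply Rmult_integral_contrapositive; split.
      apply HW; auto. apply Rinv_neq_0_compat. apply pow_nonzero. auto. }
    unfold f in Heq. rewrite Rmax_right, Rmax_left in Heq by lra.
    assert (Ha : phi1 T <> 0) by (apply Hn1; split; [lra|auto]).
    assert (Hb : phi1 x <> 0) by (apply Hn1; split; [lra|auto]).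
    intros H0. apply Hdf.
    assert (df c * (x - T) = 0).
    { rewrite <- Heq. replace (phi2 x / phi1 x - phi2 T / phi1 T)
        with (- (phi2 T * phi1 x - phi1 T * phi2 x) / (phi1 T * phi1 x)) by (field; auto).
      rewrite H0. unfold Rdiv. ring. }
    apply Rmult_integral in H. destruct H; auto. lra.
Qed.

Theorem lemma7p3 (x0 : Rbar) (T : R) (phi1 dphi1 phi2 dphi2 : R -> R) :
  Rbar_lt T x0 ->
  C1_on T x0 phi1 dphi1 ->
  C1_on T x0 phi2 dphi2 ->
  is_domin (left_filter x0) phi1 phi2 ->
  (forall x, in_I T x0 x -> phi1 x <> 0) ->
  (forall x, in_I T x0 x -> phi2 x <> 0) ->
  (forall x, in_I T x0 x -> Wr phi1 dphi1 phi2 dphi2 x <> 0) ->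
  let W := Wr phi1 dphi1 phi2 dphi2 in
  let Phi := fun x => phi2 T * phi1 x - phi1 T * phi2 x in
  let g := fun t => W t * / (Phi t ^ 2) in
  is_equiv (left_filter x0) Phi (fun x => phi2 T * phi1 x) /\
  is_equiv (left_filter x0) g
    (fun x => / (phi2 T ^ 2) * Derive (fun y => phi2 y / phi1 y) x) /\
  is_equiv (left_filter x0) (fun x => RInt_gen g (at_point x) (left_filter x0))
    (fun x => - / (phi2 T ^ 2) * (phi2 x / phi1 x)) /\
  (forall x, T < x -> Rbar_lt x x0 ->
     is_RInt_gen g (at_point x) (left_filter x0)
       (- / (phi2 T) * (phi2 x / Phi x))).
Proof.
  intros HT H1 H2 Hdom Hn1 Hn2 HW W Phi g.
  set (a := phi1 T). set (b := phi2 T).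
  assert (HTI : in_I T x0 T) by (split; [lra|auto]).
  assert (Ha : a <> 0) by (apply Hn1; auto).
  assert (Hb : b <> 0) by (apply Hn2; auto).
  assert (FF := lf_proper T x0 HT).
  assert (FF' : Filter (left_filter x0)) by (apply filter_filter).
  assert (EI := lf_event T x0 HT).
  assert (Hr : filterlim (fun x => phi2 x / phi1 x) (left_filter x0) (locally 0)).
  { apply r_lim; auto. generalize EI; apply filter_imp. intros x [Hx1 Hx2].
    apply Hn1; split; [lra|auto]. }
  assert (Pnz : forall x, T < x -> Rbar_lt x x0 -> Phi x <> 0).
  { intros x Hx Hx0. unfold Phi. eapply Phi_nz; eauto. }
  assert (Knz : forall x, T < x -> Rbar_lt x x0 -> 1 - a / b * (phi2 x / phi1 x) <> 0).
  { intros x Hx Hx0 E. apply (Pnz x Hx Hx0).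
    assert (phi1 x <> 0) by (apply Hn1; split; [lra|auto]).
    unfold Phi. fold a b.
    replace (b * phi1 x - a * phi2 x) with (b * phi1 x * (1 - a / b * (phi2 x / phi1 x)))
      by (field; auto). rewrite E; ring. }
  assert (C4 : forall x, T < x -> Rbar_lt x x0 ->
     is_RInt_gen g (at_point x) (left_filter x0) (- / b * (phi2 x / Phi x))).
  { intros x Hx Hx0.
    set (Gf := fun y => / b * (phi2 y / Phi y)).
    assert (Hlim : filterlim (fun y => Gf y - Gf x) (left_filter x0)
                     (locally (- / b * (phi2 x / Phi x)))).
    { apply (filterlim_ext_loc (fun y => (fun u => / b * (u / (b * (1 - a / b * u))) - Gf x)
                                  (phi2 y / phi1 y))).
      - generalize EI; apply filter_imp. intros y [Hy1 Hy2].
        assert (phi1 y <> 0) by (apply Hn1; split; [lra|auto]).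
        assert (Pnz' := Pnz y Hy1 Hy2). assert (Knz' := Knz y Hy1 Hy2). assert (Pnx := Pnz x Hx Hx0).
        unfold Gf. unfold Phi in *. fold a in Pnz'. fold b in Pnz'. fold a in Pnx. fold b in Pnx. fold a b. field. repeat split; auto.
      - apply (lim_comp (fun y => phi2 y / phi1 y) (fun u => / b * (u / (b * (1 - a / b * u))) - Gf x)); auto.
        + apply (ex_derive_continuous (K:=R_AbsRing) (V:=R_NormedModule)).
          auto_derive. replace (b * (1 + - (a / b * 0))) with b by ring. auto.
        + unfold Gf. unfold Rdiv. ring. }
    unfold is_RInt_gen, filterlimi, filter_le, filtermapi. intros P HP.
    assert (HPev := Hlim P HP). unfold filtermap in HPev.
    apply (Filter_prod _ _ _ (fun u => u = x)
             (fun v => x < v /\ Rbar_lt v x0 /\ P (Gf v - Gf x))).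
    - reflexivity.
    - generalize (filter_and _ _ (lf_event x x0 Hx0) HPev). apply filter_imp.
      intros v [[Hv1 Hv2] Hv3]. auto.
    - intros u v -> [Hv1 [Hv2 HPv]]. exists (Gf v - Gf x). split; auto. simpl.
      assert (Hin : forall c, Rmin x v <= c <= Rmax x v -> T < c /\ Rbar_lt c x0).
      { intros c Hc. rewrite Rmin_left, Rmax_right in Hc by lra. split; [lra|].
        apply Rbar_le_lt_trans with v; simpl; auto; lra. }
      assert (dPhi : forall c, T < c -> Rbar_lt c x0 ->
                 is_derive Phi c (b * dphi1 c - a * dphi2 c)).
      { intros c Hc Hc0.
        assert (D := is_derive_minus _ _ c _ _
                      (is_derive_scal _ c b _ (C1_derive _ _ _ _ _ H1 Hc Hc0))
                      (is_derive_scal _ c a _ (C1_derive _ _ _ _ _ H2 Hc Hc0))).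
        exact D. }
      apply (is_RInt_derive Gf g x v).
      + intros c Hc. destruct (Hin c Hc) as [Hc1 Hc2].
        assert (D := is_derive_scal _ c (/ b) _
                      (is_derive_div phi2 Phi c _ _ (C1_derive _ _ _ _ _ H2 Hc1 Hc2)
                         (dPhi c Hc1 Hc2) (Pnz c Hc1 Hc2))).
        assert (Pnz' := Pnz c Hc1 Hc2).
        replace (g c) with (/ b * ((dphi2 c * Phi c - phi2 c * (b * dphi1 c - a * dphi2 c))
                                    / Phi c ^ 2)); [exact D|].
        unfold g, W, Wr. unfold Phi in Pnz' |- *. fold a b in Pnz' |- *. field. auto.
      + intros c Hc. destruct (Hin c Hc) as [Hc1 Hc2].
        assert (Cp1 : continuous phi1 c).
        { apply (ex_derive_continuous (K:=R_AbsRing) (V:=R_NormedModule)).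
          exists (dphi1 c). apply (C1_derive _ _ _ _ _ H1 Hc1 Hc2). }
        assert (Cp2 : continuous phi2 c).
        { apply (ex_derive_continuous (K:=R_AbsRing) (V:=R_NormedModule)).
          exists (dphi2 c). apply (C1_derive _ _ _ _ _ H2 Hc1 Hc2). }
        assert (Cd1 : continuous dphi1 c).
        { apply continuity_pt_filterlim. apply (C1_dcont _ _ _ _ _ H1 Hc1 Hc2). }
        assert (Cd2 : continuous dphi2 c).
        { apply continuity_pt_filterlim. apply (C1_dcont _ _ _ _ _ H2 Hc1 Hc2). }
        assert (CW : continuous (fun t => minus (mult (phi1 t) (dphi2 t)) (mult (dphi1 t) (phi2 t))) c).
        { apply (continuous_minus (K:=R_AbsRing) (V:=R_NormedModule)); apply (continuous_mult (K:=R_AbsRing)); auto. }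
        assert (CP : continuous Phi c).
        { apply (ex_derive_continuous (K:=R_AbsRing) (V:=R_NormedModule)).
          eexists. apply (dPhi c Hc1 Hc2). }
        assert (CP2 : continuous (fun t => Phi t ^ 2) c).
        { apply (continuous_comp Phi (fun u => u ^ 2)); auto.
          apply (ex_derive_continuous (K:=R_AbsRing) (V:=R_NormedModule)). auto_derive. auto. }
        assert (CI : continuous (fun t => / (Phi t ^ 2)) c).
        { apply continuous_Rinv_comp; auto. apply pow_nonzero. apply Pnz; auto. }
        exact (continuous_mult _ _ c CW CI). }
  split; [|split; [|split]].
  -
    apply (equiv_ratio _ _ (fun x => 1 - a / b * (phi2 x / phi1 x))).
    + generalize EI; apply filter_imp. intros x [Hx1 Hx2].
      assert (phi1 x <> 0) by (apply Hn1; split; [lra|auto]).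
      unfold Phi. fold a b. field. auto.
    + apply (lim_comp (fun y => phi2 y / phi1 y) (fun u => 1 - a / b * u)); auto.
      * apply (ex_derive_continuous (K:=R_AbsRing) (V:=R_NormedModule)). auto_derive. auto.
      * ring.
  -
    apply (equiv_ratio _ _ (fun x => / (1 - a / b * (phi2 x / phi1 x)) ^ 2)).
    + generalize EI; apply filter_imp. intros x [Hx1 Hx2].
      assert (phi1 x <> 0) by (apply Hn1; split; [lra|auto]).
      assert (Pnz' := Pnz x Hx1 Hx2). assert (Knz' := Knz x Hx1 Hx2).
      rewrite (is_derive_unique _ x _ (is_derive_div phi2 phi1 x _ _
                  (C1_derive _ _ _ _ _ H2 Hx1 Hx2) (C1_derive _ _ _ _ _ H1 Hx1 Hx2) H)).
      unfold g, W, Wr. unfold Phi in Pnz' |- *. fold a b in Pnz' |- *. field. repeat split; auto.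
    + apply (lim_comp (fun y => phi2 y / phi1 y) (fun u => / (1 - a / b * u) ^ 2)); auto.
      * apply (ex_derive_continuous (K:=R_AbsRing) (V:=R_NormedModule)). auto_derive.
        replace (1 + - (a / b * 0)) with 1 by ring. lra.
      * replace (1 - a / b * 0) with 1 by ring. field.
  -
    apply (equiv_ratio _ _ (fun x => / (1 - a / b * (phi2 x / phi1 x)))).
    + generalize EI; apply filter_imp. intros x [Hx1 Hx2].
      assert (phi1 x <> 0) by (apply Hn1; split; [lra|auto]).
      assert (Pnz' := Pnz x Hx1 Hx2). assert (Knz' := Knz x Hx1 Hx2).
      rewrite (@is_RInt_gen_unique R_CompleteNormedModule _ _
                 (Proper_StrongProper _ (at_point_filter (T:=R_UniformSpace) x))
                 (Proper_StrongProper _ FF) g _ (C4 x Hx1 Hx2)).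
      unfold Phi in Pnz' |- *. fold a b in Pnz' |- *. field. repeat split; auto.
    + apply (lim_comp (fun y => phi2 y / phi1 y) (fun u => / (1 - a / b * u))); auto.
      * apply (ex_derive_continuous (K:=R_AbsRing) (V:=R_NormedModule)). auto_derive.
        replace (1 + - (a / b * 0)) with 1 by ring. lra.
      * replace (1 - a / b * 0) with 1 by ring. field.
  - exact C4.
Qed.
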